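(* Let $q\in\mathbb{C}[x_0,\dots,x_3]_2$ be a quadratic form of rank four. There are no nonsingular (i.e. reduced, consisting of ten distinct points) subschemes of $\mathbb{P}^3$ of length ten apolar to $q^2$.
   Context: $T=\mathbb{C}[y_0,\dots,y_3]$ acts on $S=\mathbb{C}[x_0,\dots,x_3]$ by differentiation; $\mathbb{P}^3=\mathbb{P}(S_1)$ has coordinate ring $T$, and a subscheme $\Gamma$ is apolar to $f$ if every element of its ideal $I_\Gamma\subset T$ annihilates $f$. *)

(* Defs.v *)
From HB Require Import structures.
From mathcomp Require Import all_boot all_order all_algebra.
From mathcomp Require Import reals.
From mathcomp Require Import complex.
From mathcomp Require Import mpoly.
Set Implicit Arguments. Unset Strict Implicit. Unset Printing Implicit Defensive.
Import Order.TTheory GRing.Theory Num.Theory.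
Local Open Scope ring_scope.

Notation CC R := (complex (Num.RealClosedField.sort (R : realType))).

(* Both S = C[x_0..x_3] and T = C[y_0..y_3] are polynomial rings in 4 vars. *)
Notation poly4 R := {mpoly (CC R)[4]}.

(* Apolarity action of T on S: y^m acts as the differential operator d^m. *)
Definition contract (R : realType) (g f : poly4 R) : poly4 R :=
  \sum_(m <- msupp g) g@_m *: mderivm m f.

Definition qmatrix (R : realType) (q : poly4 R) : 'M[CC R]_4 :=
  \matrix_(i < 4, j < 4) (mderiv i (mderiv j q))@_0%MM.

(* Homogeneous ideal I_Gamma in T of the finite set of points
   Gamma = {[a_0], ..., [a_(k-1)]} of P^3 = P(S_1): the polynomials vanishing
   on the affine cone over Gamma. *)
Definition ideal_of_points (R : realType) (k : nat) (a : 'I_k -> 'I_4 -> CC R)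
  (g : poly4 R) : Prop :=
  forall (i : 'I_k) (t : CC R), meval (fun l => t * a i l) g = 0.

Definition distinct_points (R : realType) (k : nat) (a : 'I_k -> 'I_4 -> CC R) : Prop :=
  (forall i, exists l, a i l != 0) /\
  (forall i j, i != j -> ~ exists c : CC R, forall l, a i l = c * a j l).

Definition apolar (R : realType) (k : nat) (a : 'I_k -> 'I_4 -> CC R) (f : poly4 R) : Prop :=
  forall g, ideal_of_points a g -> contract g f = 0.

(* Main.v *)
Require Import Defs.
From HB Require Import structures.
From mathcomp Require Import all_boot all_order all_algebra.
From mathcomp Require Import reals complex mpoly.
From mathcomp Require Import bigenough ssrcomplements ring zify.
Set Implicit Arguments. Unset Strict Implicit. Unset Printing Implicit Defensive.
Import Order.TTheory GRing.Theory Num.Theory BigEnough.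
Local Open Scope ring_scope.


Section Contract.
Variable R : realType.
Local Notation F := (CC R).
Local Notation P4 := (poly4 R).
Implicit Types g f p : P4.

Lemma contractE g f i : (msize g <= i)%N ->
  contract g f = \sum_(m : 'X_{1..4 < i}) g@_m *: mderivm m f.
Proof.
move=> le_gi; set I : subFinType _ := 'X_{1..4 < i}.
rewrite /contract (big_mksub I) ?msupp_uniq //=; first last.
  by move=> x /msize_mdeg_lt /leq_trans; apply.
rewrite big_rmcond //= => j /memN_msupp_eq0 ->.
by rewrite scale0r.
Qed.

Lemma contractD g1 g2 f : contract (g1 + g2) f = contract g1 f + contract g2 f.
Proof.
pose_big_enough i.
  rewrite !(@contractE _ _ i) // -big_split; apply/eq_bigr => m _.
  by rewrite mcoeffD scalerDl.
by close.
Qed.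

Lemma contract0 f : contract 0 f = 0.
Proof. by rewrite /contract msupp0 big_nil. Qed.

Lemma contractZ c g f : contract (c *: g) f = c *: contract g f.
Proof.
pose_big_enough i.
  rewrite !(@contractE _ _ i) // scaler_sumr; apply/eq_bigr => m _.
  by rewrite mcoeffZ scalerA.
by close.
Qed.

Lemma contract_sum (I : Type) (r : seq I) (P : pred I) (G : I -> P4) f :
  contract (\sum_(i <- r | P i) G i) f = \sum_(i <- r | P i) contract (G i) f.
Proof. by elim/big_rec2: _ => [|i x y _ <-]; rewrite ?contract0 ?contractD. Qed.

Lemma contractX m f : contract 'X_[m] f = mderivm m f.
Proof. by rewrite /contract msuppX big_seq1 mcoeffX eqxx scale1r. Qed.

Lemma contractX4 (a b c d : 'I_4) f :
  contract ('X_a * 'X_b * 'X_c * 'X_d) f = mderiv d (mderiv c (mderiv b (mderiv a f))).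
Proof. by rewrite -!mpolyXD contractX !mderivmDm !mderivmU1m. Qed.

Lemma mderiv_homog d p i : p \is d.+1.-homog -> mderiv i p \is d.-homog.
Proof.
move=> hp; apply/dhomogP => m; rewrite mcoeff_msupp mcoeff_deriv => nz.
have: (m + U_(i))%MM \in msupp p.
  by rewrite mcoeff_msupp; apply: contraNneq nz => ->; rewrite mul0rn.
move/(dhomog_mf hp). by rewrite /= mdegD mdeg1 addn1 => -[].
Qed.

Lemma homog0_const p : p \is 0.-homog -> p = (p@_0)%:MP.
Proof.
move=> hp; apply/mpolyP => m; rewrite mcoeffC.
have [->|nz] := eqVneq m 0%MM; first by rewrite ?eqxx ?mulr1.
rewrite mulr0; apply: (dhomog_nemf_coeff hp).
by rewrite mdeg_eq0.
Qed.

End Contract.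


Section Quad.
Variable R : realType.
Local Notation F := (CC R).
Local Notation P4 := (poly4 R).
Variable q : P4.
Hypothesis hq : q \is 2.-homog.
Local Notation Q := (qmatrix q).

Lemma D2q i j : mderiv i (mderiv j q) = (Q i j)%:MP.
Proof.
rewrite mxE; apply: homog0_const; apply: mderiv_homog; exact: mderiv_homog.
Qed.

Lemma Qsym i j : Q i j = Q j i.
Proof. by rewrite !mxE mderiv_comm. Qed.

Lemma D4q a b c d : mderiv d (mderiv c (mderiv b (mderiv a (q ^+ 2)))) =
  (2 * (Q b a * Q d c + Q c a * Q d b + Q d a * Q c b))%:MP.
Proof.
rewrite expr2 !(mderivD, mderivM, D2q, mderivC).
rewrite !(mul0r, mulr0, add0r, addr0) !(mpolyCD, mpolyCM) ?mpolyC_nat.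
ring.
Qed.

Definition lin (u : 'rV[F]_4) : P4 := \sum_j u 0 j *: 'X_j.
Definition quad (B : 'M[F]_4) : P4 := \sum_a \sum_b B a b *: ('X_a * 'X_b).

Lemma expand B u v : lin u * lin v * quad B =
  \sum_c \sum_d \sum_a \sum_b (u 0 c * v 0 d * B a b) *: ('X_c * 'X_d * 'X_a * 'X_b).
Proof.
rewrite /quad /lin !mulr_suml; apply: eq_bigr => c _.
rewrite -mulrA big_distrl /= mulr_sumr; apply: eq_bigr => d _.
rewrite !mulr_sumr; apply: eq_bigr => a _.
rewrite !mulr_sumr; apply: eq_bigr => b _.
rewrite -!mul_mpolyC !mpolyCM; ring.
Qed.

Definition Phi (B : 'M[F]_4) (u v : 'rV[F]_4) : F :=
  \sum_c \sum_d \sum_a \sum_b (u 0 c * v 0 d * B a b) *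
     (2 * (Q d c * Q b a + Q a c * Q b d + Q b c * Q a d)).

Lemma contract_main B u v :
  contract (lin u * lin v * quad B) (q ^+ 2) = (Phi B u v)%:MP.
Proof.
rewrite expand /Phi contract_sum raddf_sum; apply: eq_bigr => c _.
rewrite contract_sum raddf_sum; apply: eq_bigr => d _.
rewrite contract_sum raddf_sum; apply: eq_bigr => a _.
rewrite contract_sum raddf_sum; apply: eq_bigr => b _.
by rewrite contractZ contractX4 (D4q c d a b) -mul_mpolyC -mpolyCM.
Qed.

End Quad.


Section MatConv.
Variable F : fieldType.

Lemma bilE (u v : 'rV[F]_4) (B : 'M[F]_4) :
  (u *m B *m v^T) 0 0 = \sum_i \sum_j u 0 i * B i j * v 0 j.
Proof.
rewrite mxE exchange_big /=; apply: eq_bigr => j _.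
by rewrite !mxE big_distrl /=.
Qed.

Lemma trE (B Q : 'M[F]_4) : \tr (B *m Q) = \sum_a \sum_b B a b * Q b a.
Proof. by rewrite /mxtrace; apply: eq_bigr => a _; rewrite mxE. Qed.

Lemma QBQE (B Q : 'M[F]_4) c d : (Q *m (B + B^T) *m Q) c d =
  \sum_a \sum_b Q c a * B a b * Q b d + \sum_a \sum_b Q c b * B a b * Q a d.
Proof.
rewrite mxE.
have -> : \sum_k (Q *m (B + B^T)) c k * Q k d =
   \sum_k \sum_l (Q c l * B l k * Q k d + Q c l * B k l * Q k d).
  apply: eq_bigr => k _; rewrite mxE big_distrl /=; apply: eq_bigr => l _.
  by rewrite !mxE; ring.
rewrite (eq_bigr (fun k => \sum_l Q c l * B l k * Q k d + \sum_l Q c l * B k l * Q k d)); last first.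
  by move=> k _; rewrite big_split.
rewrite big_split /= exchange_big /=; congr (_ + _).
Qed.

Lemma Phi_conv_cd (Q B : 'M[F]_4) (u v : 'rV[F]_4) c d (Qs : forall i j, Q i j = Q j i) :
  \sum_a \sum_b (u 0 c * v 0 d * B a b) * (2 * (Q d c * Q b a + Q a c * Q b d + Q b c * Q a d))
  = 2 * (u 0 c * (\tr (B *m Q) *: Q + Q *m (B + B^T) *m Q) c d * v 0 d).
Proof.
rewrite mxE [in RHS]mxE QBQE trE.
have -> : \sum_a \sum_b (u 0 c * v 0 d * B a b) *
     (2 * (Q d c * Q b a + Q a c * Q b d + Q b c * Q a d)) =
  2 * u 0 c * v 0 d * Q c d * (\sum_a \sum_b B a b * Q b a)
  + 2 * u 0 c * v 0 d * (\sum_a \sum_b Q c a * B a b * Q b d)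
  + 2 * u 0 c * v 0 d * (\sum_a \sum_b Q c b * B a b * Q a d).
  rewrite !mulr_sumr -!big_split /=; apply: eq_bigr => a _.
  rewrite !mulr_sumr -!big_split /=; apply: eq_bigr => b _.
  rewrite (Qs d c) (Qs a c) (Qs b c); ring.
ring.
Qed.

Lemma Phi_conv (Q B : 'M[F]_4) (u v : 'rV[F]_4) (Qs : forall i j, Q i j = Q j i) :
  \sum_c \sum_d \sum_a \sum_b (u 0 c * v 0 d * B a b) *
     (2 * (Q d c * Q b a + Q a c * Q b d + Q b c * Q a d))
  = 2 * (u *m (\tr (B *m Q) *: Q + Q *m (B + B^T) *m Q) *m v^T) 0 0.
Proof.
rewrite bilE mulr_sumr; apply: eq_bigr => c _.
rewrite mulr_sumr; apply: eq_bigr => d _.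
by rewrite Phi_conv_cd.
Qed.

End MatConv.


Section Final.
Variable F : numFieldType.

Lemma eq_from2F (a b c d : F) : a = b -> c - d = b - a -> c = d.
Proof. by move=> hab h; apply/eqP; rewrite -subr_eq0 h hab subrr. Qed.

Lemma eq_fromF (a b c d : F) : a = b -> c - d = a - b -> c = d.
Proof. by move=> hab h; apply/eqP; rewrite -subr_eq0 h hab subrr. Qed.

Lemma sq_pm (r s : F) : r ^+ 2 = s ^+ 2 -> r = s \/ r = - s.
Proof.
move=> h; have : (r - s) * (r + s) = 0 by rewrite -subr_sqr h subrr.
move/eqP; rewrite mulf_eq0 => /orP [/eqP h1|/eqP h1]; [left|right].
  by apply/eqP; rewrite -subr_eq0 h1.
by apply/eqP; rewrite -addr_eq0 h1.
Qed.

Lemma final (M : 'I_10 -> 'I_10 -> F) (cc : 'I_10 -> F) :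
  (forall k, 5%:R * cc k * M k k = 2%:R) ->
  (forall k l, l != k -> M k k * M l l = 6%:R * M k l ^+ 2) ->
  (forall k l, M k l = M l k) ->
  M ord0 (@Ordinal 10 1 isT) + M (@Ordinal 10 1 isT) ord0 =
    \sum_k (M ord0 k * M (@Ordinal 10 1 isT) k + M (@Ordinal 10 1 isT) k * M ord0 k) * cc k ->
  False.
Proof.
set o0 : 'I_10 := ord0; set o1 : 'I_10 := @Ordinal 10 1 isT.
set o2 : 'I_10 := @Ordinal 10 2 isT.
move=> h5 h6 hs hE.
have nz k : M k k != 0.
  apply/eqP => h0; have := h5 k; rewrite h0 mulr0 => /eqP; by rewrite eq_sym pnatr_eq0.
pose r k := M o0 k * M o1 k * cc k.
pose Pr := fun k : 'I_10 => (k != o0) && (k != o1).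
have hsum : 5%:R * \sum_(k | Pr k) r k = M o0 o1.
  move: hE; rewrite (bigD1 o0) //= (bigD1 o1) //= => hE.
  have e0 : (M o0 o0 * M o1 o0 + M o1 o0 * M o0 o0) * cc o0 = (M o0 o1 + M o0 o1) * (2%:R / 5%:R).
    rewrite (hs o1 o0) -(h5 o0) ; by field; rewrite ?pnatr_eq0.
  have e1 : (M o0 o1 * M o1 o1 + M o1 o1 * M o0 o1) * cc o1 = (M o0 o1 + M o0 o1) * (2%:R / 5%:R).
    rewrite -(h5 o1); by field; rewrite ?pnatr_eq0.
  rewrite e0 e1 (hs o1 o0) in hE.
  have -> : \sum_(k | Pr k) r k = (\sum_(i < 10 | (i != o0) && (i != o1))
          (M o0 i * M o1 i + M o1 i * M o0 i) * cc i) / 2%:R.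
    rewrite big_distrl /=; apply: eq_bigr => k _; rewrite /r; by field; rewrite ?pnatr_eq0.
  move: hE; move: (\sum_(i < 10 | _) _) => S hE.
  have -> : S = (M o0 o1 + M o0 o1) / 5%:R.
    by apply: (eq_from2F hE); field; rewrite ?pnatr_eq0.
  by field; rewrite ?pnatr_eq0.
have hr k : Pr k -> 225%:R * r k ^+ 2 = M o0 o0 * M o1 o1.
  case/andP => k0 k1.
  have e : 225%:R * r k ^+ 2 * 4%:R =
    (6%:R * M o0 k ^+ 2) * (6%:R * M o1 k ^+ 2) * (5%:R * cc k) ^+ 2 by rewrite /r; ring.
  rewrite -(h6 o0 k k0) -(h6 o1 k k1) in e.
  have e' : M o0 o0 * M k k * (M o1 o1 * M k k) * (5%:R * cc k) ^+ 2 =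
     M o0 o0 * M o1 o1 * (5%:R * cc k * M k k) ^+ 2 by ring.
  rewrite e' h5 in e.
  apply: (mulIf (x := 4%:R)); first by rewrite pnatr_eq0.
  by rewrite e; ring.
set s := r o2.
have P2 : Pr o2 by [].
have hpm k : Pr k -> r k = s \/ r k = - s.
  move=> pk; apply: sq_pm; apply: (mulfI (x := 225%:R)); first by rewrite pnatr_eq0.
  by rewrite hr // hr.
pose z : int := \sum_(k | Pr k) (if r k == s then 1 else -1).
have hz : \sum_(k | Pr k) r k = s * z%:~R.
  rewrite /z rmorph_sum mulr_sumr; apply: eq_bigr => k pk.
  case: (hpm k pk) => ->; first by rewrite eqxx mulr1.
  case: (eqVneq (- s) s) => [->|_]; first by rewrite mulr1.
  by rewrite mulrN1.
have hM : M o0 o0 * M o1 o1 = 6%:R * M o0 o1 ^+ 2 by apply: h6.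
rewrite hz in hsum.
have hs2 := hr o2 P2; rewrite -/s in hs2.
have snz : s ^+ 2 != 0.
  apply/eqP => s0; move: hs2; rewrite s0 mulr0 => /esym/eqP.
  by rewrite mulf_eq0 !(negbTE (nz _)).
set Z : F := z%:~R in hsum.
have h2 : Z ^+ 2 * 2%:R = 3%:R.
  apply: (mulIf snz); apply: (mulIf (x := 75%:R)); first by rewrite pnatr_eq0.
  have : 6%:R * (5%:R * (s * Z)) ^+ 2 = 225%:R * s ^+ 2 by rewrite hsum -hM hs2.
  move=> h; apply: (eq_fromF h); ring.
have : ((z ^+ 2 * 2 - 3)%:~R : F) = 0.
  by rewrite rmorphB rmorphM rmorphXn /= -/Z h2 subrr.
move/eqP; rewrite intr_eq0 => /eqP hz2.
lia.
Qed.
End Final.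


Section Alg.
Variable F : numFieldType.

Definition dot (x y : 'rV[F]_4) := (x *m y^T) 0 0.
Definition XB (Q B : 'M[F]_4) := \tr (B *m Q) *: Q + Q *m (B + B^T) *m Q.

Lemma dot_delta (w : 'rV[F]_4) j : (w *m (delta_mx 0 j : 'rV[F]_4)^T) 0 0 = w 0 j.
Proof.
rewrite trmx_delta mxE (bigD1 j) //= !mxE !eqxx mulr1 big1 ?addr0 // => l /negbTE hl.
by rewrite !mxE hl mulr0.
Qed.

Lemma row_eq0 (w : 'rV[F]_4) : (forall v : 'rV[F]_4, (w *m v^T) 0 0 = 0) -> w = 0.
Proof. by move=> h; apply/rowP => j; rewrite mxE -dot_delta h. Qed.

Lemma mat_eq0 (X : 'M[F]_4) : (forall u v : 'rV[F]_4, (u *m X *m v^T) 0 0 = 0) -> X = 0.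
Proof.
move=> h; apply/matrixP => i j.
have := h (delta_mx 0 i) (delta_mx 0 j); rewrite dot_delta -rowE mxE => ->.
by rewrite mxE.
Qed.

Lemma bil_sym (x y : 'rV[F]_4) (P : 'M[F]_4) : P^T = P ->
  (x *m P *m y^T) 0 0 = (y *m P *m x^T) 0 0.
Proof.
move=> Ps; have -> : (x *m P *m y^T) 0 0 = ((x *m P *m y^T)^T) 0 0 by rewrite [RHS]mxE.
by rewrite !trmx_mul trmxK Ps mulmxA.
Qed.

Lemma mul11 (x y z w : 'rV[F]_4) :
  (x *m (y^T *m z) *m w^T) 0 0 = (x *m y^T) 0 0 * (z *m w^T) 0 0.
Proof. by rewrite mulmxA -mulmxA mxE big_ord1. Qed.



Lemma dotE (x y : 'rV[F]_4) : dot x y = \sum_l x 0 l * y 0 l.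
Proof. by rewrite /dot mxE; apply: eq_bigr => l _; rewrite mxE. Qed.
Lemma dotDl x1 x2 y : dot (x1 + x2) y = dot x1 y + dot x2 y.
Proof. by rewrite !dotE -big_split; apply: eq_bigr => l _; rewrite mxE mulrDl. Qed.
Lemma dotNl x y : dot (- x) y = - dot x y.
Proof. by rewrite !dotE -sumrN; apply: eq_bigr => l _; rewrite mxE mulNr. Qed.
Lemma dotBl x1 x2 y : dot (x1 - x2) y = dot x1 y - dot x2 y.
Proof. by rewrite dotDl dotNl. Qed.
Lemma dotZl s x y : dot (s *: x) y = s * dot x y.
Proof. by rewrite !dotE mulr_sumr; apply: eq_bigr => l _; rewrite mxE mulrA. Qed.
Lemma dot_sym x y : dot x y = dot y x.
Proof. by rewrite !dotE; apply: eq_bigr => l _; rewrite mulrC. Qed.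
Lemma dot_deltar x l : dot x (delta_mx 0 l) = x 0 l.
Proof. exact: dot_delta. Qed.

Lemma eq_from (a b c d : F) : a = b -> c - d = a - b -> c = d.
Proof. by move=> hab h; apply/eqP; rewrite -subr_eq0 h hab subrr. Qed.
Lemma eq_from2 (a b c d : F) : a = b -> c - d = b - a -> c = d.
Proof. by move=> hab h; apply/eqP; rewrite -subr_eq0 h hab subrr. Qed.

Variable Q : 'M[F]_4.
Hypothesis Qs : Q^T = Q.
Hypothesis Qu : Q \in unitmx.
Variable pts : 'I_10 -> 'rV[F]_4.
Definition qval k (B : 'M[F]_4) := (pts k *m B *m (pts k)^T) 0 0.
Hypothesis H : forall (B : 'M[F]_4) (u v : 'rV[F]_4), (forall k, qval k B = 0 \/ dot u (pts k) = 0) ->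
   (u *m XB Q B *m v^T) 0 0 = 0.
Local Notation P := (invmx Q).

Lemma PQ : P *m Q = 1%:M. Proof. exact: mulVmx. Qed.
Lemma QP : Q *m P = 1%:M. Proof. exact: mulmxV. Qed.
Lemma Ps : P^T = P. Proof. by rewrite trmx_inv Qs. Qed.
Lemma trT B : \tr (B^T *m Q) = \tr (B *m Q).
Proof. by rewrite -mxtrace_tr trmx_mul trmxK Qs mxtrace_mulC. Qed.

Lemma PXP B : P *m XB Q B *m P = \tr (B *m Q) *: P + (B + B^T).
Proof.
rewrite /XB mulmxDr mulmxDl -scalemxAr -scalemxAl PQ mul1mx.
by rewrite !mulmxA PQ mul1mx -mulmxA QP mulmx1.
Qed.

Lemma inj B : (forall k, qval k B = 0) -> B + B^T = 0.
Proof.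
move=> hB.
have hX : XB Q B = 0 by apply: mat_eq0 => u v; apply: H => k; left.
have e : B + B^T = - (\tr (B *m Q) *: P).
  apply/eqP; rewrite -addr_eq0 addrC -PXP hX mulmx0 mul0mx //.
have htr : \tr ((B + B^T) *m Q) = \tr (B *m Q) + \tr (B *m Q).
  by rewrite mulmxDl mxtraceD trT.
have := congr1 (fun M => \tr (M *m Q)) e; rewrite /= htr mulNmx -scalemxAl PQ raddfN /= mxtraceZ mxtrace1 => h6.
have c0 : \tr (B *m Q) = 0.
  move: h6; set c := \tr (B *m Q) => h6.
  have h7 : c * 6%:R = (c + c) + c * 4%:R by ring.
  move: h7; rewrite h6 addNr => /eqP.
  by rewrite mulf_eq0 pnatr_eq0 orbF => /eqP.
by rewrite e c0 scale0r oppr0.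
Qed.


Lemma mulmxQP (A : 'M[F]_(1,4)) : A *m Q *m P = A.
Proof. by rewrite -mulmxA QP mulmx1. Qed.
Lemma mulmxPQ (A : 'M[F]_(1,4)) : A *m P *m Q = A.
Proof. by rewrite -mulmxA PQ mulmx1. Qed.

Section Point.
Variable i : 'I_10.
Variable B : 'M[F]_4.
Hypothesis Bs : B^T = B.
Hypothesis hB : forall k, k != i -> qval k B = 0.
Local Notation a := (pts i).
Local Notation c := (\tr (B *m Q)).

Lemma hperp u : dot u a = 0 -> u *m Q *m B + u *m Q *m B = - (c *: u).
Proof.
move=> hu.
have hX : u *m XB Q B = 0.
  apply: row_eq0 => v; apply: H => k.
  by case: (eqVneq k i) => [->|/hB]; [right|left].
have := congr1 (fun w => w *m P) hX; rewrite mul0mx /XB Bs.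
rewrite mulmxDr mulmxDl -scalemxAr -scalemxAl !mulmxA !mulmxQP mulmxDr.
by move/eqP; rewrite addrC addr_eq0 => /eqP.
Qed.

Variable e : 'rV[F]_4.
Hypothesis he : dot e a = 1.
Local Notation g := (e *m Q *m B + e *m Q *m B + c *: e).

Lemma Kform x : x *m Q *m B + x *m Q *m B = - (c *: x) + dot x a *: g.
Proof.
set s := dot x a.
have hx : dot (x - s *: e) a = 0 by rewrite dotBl dotZl he mulr1 subrr.
have := hperp hx; rewrite !mulmxBl -!scalemxAl.
move: (x *m Q *m B) (e *m Q *m B) => A E h.
apply/rowP => l; have := congr1 (fun w : 'rV[F]_4 => w 0 l) h; rewrite !mxE => hl.
apply: (eq_from hl); ring.
Qed.

Lemma gen x y : dot (x *m B) y + dot (x *m B) y =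
  - (c * dot (x *m P) y) + dot (x *m P) a * dot g y.
Proof.
have := congr1 (fun w => dot w y) (Kform (x *m P)).
by rewrite /= mulmxPQ dotDl => ->; rewrite dotDl dotNl !dotZl.
Qed.

Lemma trace_fact : dot g a = 6%:R * c.
Proof.
have hc : c = \sum_l dot (delta_mx 0 l *m Q *m B) (delta_mx 0 l).
  rewrite mxtrace_mulC /mxtrace; apply: eq_bigr => l _ /=.
  by rewrite dot_deltar -mulmxA -rowE [RHS]mxE.
have : c + c = \sum_l (- c + a 0 l * g 0 l).
  rewrite [in LHS]hc -big_split /=; apply: eq_bigr => l _.
  rewrite -dotDl (Kform (delta_mx 0 l)) dotDl dotNl !dotZl !dot_deltar !mxE !eqxx /= mulr1.
  by rewrite dot_sym dot_deltar.
rewrite big_split /= sumr_const card_ord -dotE dot_sym => h.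
apply: (eq_from2 h); ring.
Qed.


Lemma point_val : qval i B = 1 -> 5%:R * c * dot (a *m P) a = 2%:R.
Proof.
move=> hv; have hv' : dot (a *m B) a = 1 := hv.
have := gen a a; rewrite trace_fact hv' => h; apply: (eq_from2 h); ring.
Qed.

Lemma alg1 (c0 al be M X D Y : F) : Y = 0 ->
  X + X = - (c0 * M) + M * (6%:R * c0) -> X + X = - (c0 * M) + al * D ->
  Y + Y = - (c0 * be) + M * D -> c0 != 0 -> al * be = 6%:R * M ^+ 2.
Proof.
move=> hY h1 h2 h3 nc.
have z1 : (X + X) - (- (c0 * M) + M * (6%:R * c0)) = 0 by rewrite h1 subrr.
have z2 : (X + X) - (- (c0 * M) + al * D) = 0 by rewrite h2 subrr.
have z3 : (Y + Y) - (- (c0 * be) + M * D) = 0 by rewrite h3 subrr.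
have key : c0 * (al * be - 6%:R * M ^+ 2) =
  al * (((Y + Y) - (- (c0 * be) + M * D)) - (Y + Y)) +
  M * (((X + X) - (- (c0 * M) + M * (6%:R * c0))) - ((X + X) - (- (c0 * M) + al * D))).
  ring.
move: key; rewrite z1 z2 z3 hY !(addr0, subrr, mulr0, sub0r, oppr0) => /eqP.
by rewrite mulf_eq0 (negbTE nc) /= subr_eq0 => /eqP.
Qed.

Lemma point_pair j : j != i -> qval i B = 1 ->
  dot (a *m P) a * dot (pts j *m P) (pts j) = 6%:R * (dot (a *m P) (pts j)) ^+ 2.
Proof.
move=> ji hv.
have nc : c != 0.
  apply/negP => /eqP c0; have := point_val hv; rewrite c0 mulr0 mul0r => /eqP.
  by rewrite eq_sym pnatr_eq0.
have sB : dot (pts j *m B) a = dot (a *m B) (pts j) by rewrite /dot bil_sym.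
have sP : dot (pts j *m P) a = dot (a *m P) (pts j) by rewrite /dot bil_sym // Ps.
have e1 := gen (pts j) a; rewrite trace_fact sB sP in e1.
have e2 := gen a (pts j).
have e3 := gen (pts j) (pts j); rewrite sP in e3.
exact: (alg1 (hB ji) e1 e2 e3 nc).
Qed.
End Point.


Definition ptab : seq (seq nat) :=
  [:: [:: 0; 4; 5; 6]; [:: 4; 1; 7; 8]; [:: 5; 7; 2; 9]; [:: 6; 8; 9; 3]]%N.
Definition pidx (j k : nat) : nat := nth 0%N (nth [::] ptab j) k.
Definition sb (p : 'I_10) : 'M[F]_4 := \matrix_(j, k) ((pidx j k == p)%:R).

Lemma pidx_sym (j k : 'I_4) : pidx j k = pidx k j.
Proof. by case: j k => [[|[|[|[|j]]]] hj] [[|[|[|[|k]]]] hk]. Qed.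

Lemma sb_sym p : (sb p)^T = sb p.
Proof. by apply/matrixP => j k; rewrite !mxE pidx_sym. Qed.

Lemma pidx_surj (p : 'I_10) : exists j k : 'I_4, pidx j k = p.
Proof.
case: p => [[|[|[|[|[|[|[|[|[|[|p]]]]]]]]]] hp] //=.
- by exists (@Ordinal 4 0 isT), (@Ordinal 4 0 isT).
- by exists (@Ordinal 4 1 isT), (@Ordinal 4 1 isT).
- by exists (@Ordinal 4 2 isT), (@Ordinal 4 2 isT).
- by exists (@Ordinal 4 3 isT), (@Ordinal 4 3 isT).
- by exists (@Ordinal 4 0 isT), (@Ordinal 4 1 isT).
- by exists (@Ordinal 4 0 isT), (@Ordinal 4 2 isT).
- by exists (@Ordinal 4 0 isT), (@Ordinal 4 3 isT).
- by exists (@Ordinal 4 1 isT), (@Ordinal 4 2 isT).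
- by exists (@Ordinal 4 1 isT), (@Ordinal 4 3 isT).
- by exists (@Ordinal 4 2 isT), (@Ordinal 4 3 isT).
Qed.

Lemma val_sum (k : 'I_10) (s : 'I_10 -> F) (Ms : 'I_10 -> 'M[F]_4) :
  qval k (\sum_p s p *: Ms p) = \sum_p s p * qval k (Ms p).
Proof.
rewrite /qval mulmx_sumr mulmx_suml summxE; apply: eq_bigr => p _.
by rewrite -scalemxAr -scalemxAl mxE.
Qed.

Lemma valdot k B : qval k B = dot (pts k *m B) (pts k).
Proof. by []. Qed.

Lemma valB k (B1 B2 : 'M[F]_4) : qval k (B1 - B2) = qval k B1 - qval k B2.
Proof. by rewrite !valdot mulmxBr dotBl. Qed.

Lemma valD k (B1 B2 : 'M[F]_4) : qval k (B1 + B2) = qval k B1 + qval k B2.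
Proof. by rewrite !valdot mulmxDr dotDl. Qed.

Lemma sym0 (D : 'M[F]_4) : D^T = D -> D + D^T = 0 -> D = 0.
Proof.
move=> Ds h; apply/matrixP => j k; have := congr1 (fun M : 'M[F]_4 => M j k) h.
rewrite Ds !mxE => /eqP; rewrite -mulr2n mulrn_eq0 /= => /eqP ->; rewrite ?mxE.
by [].
Qed.

Lemma sum_sym (s : 'I_10 -> F) : (\sum_p s p *: sb p)^T = \sum_p s p *: sb p.
Proof.
by rewrite raddf_sum /=; apply: eq_bigr => p _; rewrite linearZ /= sb_sym.
Qed.

Definition Wm : 'M[F]_10 := \matrix_(p, k) qval k (sb p).

Lemma W_unit : Wm \in unitmx.
Proof.
rewrite -row_free_unit; apply/inj_row_free => c hc.
set Bc := \sum_p c 0 p *: sb p.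
have hv k : qval k Bc = 0.
  rewrite val_sum; transitivity ((c *m Wm) 0 k); last by rewrite hc mxE.
  by rewrite mxE; apply: eq_bigr => p _; rewrite /Wm mxE.
have B0 := sym0 (sum_sym _) (inj hv).
apply/rowP => p; have [j [k hjk]] := pidx_surj p.
have := congr1 (fun M : 'M[F]_4 => M j k) B0.
rewrite summxE (bigD1 p) //= big1 ?addr0.
  by rewrite !mxE hjk eqxx mulr1 => ->.
move=> q qp; rewrite !mxE hjk.
have -> : (nat_of_ord p == nat_of_ord q) = false.
  by apply/negbTE; apply: contra qp => /eqP /val_inj ->.
by rewrite mulr0.
Qed.

Definition dualB (i : 'I_10) : 'M[F]_4 :=
  \sum_p ((delta_mx 0 i : 'rV[F]_10) *m invmx Wm) 0 p *: sb p.

Lemma dualB_sym i : (dualB i)^T = dualB i.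
Proof. exact: sum_sym. Qed.

Lemma dualB_val i k : qval k (dualB i) = (k == i)%:R.
Proof.
rewrite val_sum.
have : (delta_mx 0 i : 'rV[F]_10) *m invmx Wm *m Wm = delta_mx 0 i by rewrite mulmxKV // W_unit.
move/(congr1 (fun w : 'rV[F]_10 => w 0 k)) => hk.
rewrite [RHS](_ : _ = (delta_mx 0 i : 'rV[F]_10) 0 k); last by rewrite mxE eqxx /= eq_sym.
rewrite -hk mxE; apply: eq_bigr => p _; by rewrite /Wm mxE.
Qed.

Lemma expand_sym B : B^T = B -> B = \sum_k qval k B *: dualB k.
Proof.
move=> Bs; set S := \sum_k _.
have ST : S^T = S.
  by rewrite /S raddf_sum /=; apply: eq_bigr => p _; rewrite linearZ /= dualB_sym.
have hv l : qval l (B - S) = 0.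
  rewrite valB val_sum (bigD1 l) //= dualB_val eqxx mulr1 big1 ?addr0 ?subrr //.
  by move=> k /negbTE kl; rewrite dualB_val eq_sym kl mulr0.
have DT : (B - S)^T = B - S by rewrite linearB /= Bs ST.
by apply/eqP; rewrite -subr_eq0; apply/eqP; apply: sym0 DT (inj hv).
Qed.

Lemma tr11 (x y : 'rV[F]_4) : \tr (x^T *m y) = dot y x.
Proof. by rewrite mxtrace_mulC /mxtrace big_ord1. Qed.

Lemma alg_main : (forall k, exists l, pts k 0 l != 0) -> False.
Proof.
move=> hnz.
pose Mf k l := dot (pts k *m P) (pts l).
pose cc k := \tr (dualB k *m Q).
have hB k l : l != k -> qval l (dualB k) = 0 by move/negbTE => h; rewrite dualB_val h.
have pv k : 5%:R * cc k * Mf k k = 2%:R.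
  have [l hl] := hnz k.
  pose e := (pts k 0 l)^-1 *: (delta_mx 0 l : 'rV[F]_4).
  have he : dot e (pts k) = 1 by rewrite dotZl dot_sym dot_deltar mulVf.
  by apply: (point_val (dualB_sym k) (hB k) he); rewrite dualB_val eqxx.
have pp k l : l != k -> Mf k k * Mf l l = 6%:R * Mf k l ^+ 2.
  move=> lk; have [l' hl] := hnz k.
  pose e := (pts k 0 l')^-1 *: (delta_mx 0 l' : 'rV[F]_4).
  have he : dot e (pts k) = 1 by rewrite dotZl dot_sym dot_deltar mulVf.
  by apply: (point_pair (dualB_sym k) (hB k) he lk); rewrite dualB_val eqxx.
have ms k l : Mf k l = Mf l k by rewrite /Mf /dot bil_sym // Ps.
set o0 : 'I_10 := ord0; set o1 : 'I_10 := @Ordinal 10 1 isT.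
pose y := pts o0 *m P; pose z := pts o1 *m P.
pose B' := y^T *m z + z^T *m y.
have B'T : B'^T = B' by rewrite /B' linearD /= !trmx_mul !trmxK addrC.
have hexp := expand_sym B'T.
have htr : \tr (B' *m Q) = \sum_k qval k B' * cc k.
  rewrite {1}hexp mulmx_suml raddf_sum /=; apply: eq_bigr => k _.
  by rewrite -scalemxAl mxtraceZ.
have hvB k : qval k B' = Mf o0 k * Mf o1 k + Mf o1 k * Mf o0 k.
  rewrite valD /qval !mul11.
  have e1 : (pts k *m y^T) 0 0 = Mf o0 k := dot_sym _ _.
  have e2 : (z *m (pts k)^T) 0 0 = Mf o1 k := erefl.
  have e3 : (pts k *m z^T) 0 0 = Mf o1 k := dot_sym _ _.
  have e4 : (y *m (pts k)^T) 0 0 = Mf o0 k := erefl.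
  by rewrite e1 e2 e3 e4.
have htr2 : \tr (B' *m Q) = Mf o0 o1 + Mf o1 o0.
  rewrite /B' mulmxDl mxtraceD -!mulmxA !tr11 /y /z PQ !mulmx1 /Mf.
  by congr (_ + _); apply: dot_sym.
apply: (@final F Mf cc pv pp ms).
by rewrite -htr2 htr; apply: eq_bigr => k _; rewrite hvB.
Qed.
End Alg.


Lemma mev_lin (R : realType) (x : 'I_4 -> CC R) (u : 'rV[CC R]_4) :
  meval x (lin u) = \sum_j u 0 j * x j.
Proof.
rewrite /lin (big_morph (meval x) (mevalD x) (meval0 x)); apply: eq_bigr => j _.
by rewrite mevalZ mevalXU.
Qed.

Lemma mev_quad (R : realType) (x : 'I_4 -> CC R) (B : 'M[CC R]_4) :
  meval x (quad B) = \sum_a \sum_b B a b * (x a * x b).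
Proof.
rewrite /quad (big_morph (meval x) (mevalD x) (meval0 x)); apply: eq_bigr => a _.
rewrite (big_morph (meval x) (mevalD x) (meval0 x)); apply: eq_bigr => b _.
by rewrite mevalZ mevalM !mevalXU.
Qed.

Theorem lemma4p15 (R : realType) (q : poly4 R) :
  q \is 2.-homog -> \rank (qmatrix q) = 4%N ->
  ~ exists a : 'I_10 -> 'I_4 -> CC R, distinct_points a /\ apolar a (q ^+ 2).
Proof.
move=> hq hr [a [[hnz _] hap]].
pose pts (k : 'I_10) : 'rV[CC R]_4 := \row_l a k l.
have Qs' : forall i j, qmatrix q i j = qmatrix q j i by move=> i j; apply: Qsym.
have Qs : (qmatrix q)^T = qmatrix q by apply/matrixP => i j; rewrite mxE Qs'.
have Qu : qmatrix q \in unitmx by rewrite -row_free_unit /row_free hr.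
apply: (@alg_main _ _ Qs Qu pts).
  move=> B u v hk.
  have hid : ideal_of_points a (lin u * lin v * quad B).
    move=> k t; rewrite !mevalM !mev_lin mev_quad.
    have e1 : forall w : 'rV[CC R]_4, \sum_j w 0 j * (t * a k j) = t * dot w (pts k).
      move=> w; rewrite dotE mulr_sumr; apply: eq_bigr => j _; rewrite mxE; ring.
    have e2 : \sum_a0 \sum_b B a0 b * ((t * a k a0) * (t * a k b)) = t ^+ 2 * qval pts k B.
      rewrite /qval bilE mulr_sumr; apply: eq_bigr => i _.
      rewrite mulr_sumr; apply: eq_bigr => j _; rewrite !mxE; ring.
    rewrite !e1 e2; case: (hk k) => ->; ring.
  have := hap _ hid; rewrite contract_main // => /eqP; rewrite mpolyC_eq0 => /eqP.
  rewrite /Phi Phi_conv // => /eqP; rewrite mulf_eq0 pnatr_eq0 /= => /eqP.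
  by rewrite /XB.
move=> k; have [l hl] := hnz k; exists l; by rewrite mxE.
Qed.
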